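(* Let $g\ge0$, $n\ge1$ with $2-2g-n<0$, and let $\Gamma$ be a trivalent ribbon graph of type $(g,n)$ with edges labelled $1,\dots,6g-6+3n$. Then the oriented adjacency matrix $B$ of $\Gamma$ (a $(6g-6+3n)\times(6g-6+3n)$ skew-symmetric integer matrix) has rank $6g-6+2n$.
   Context: A ribbon graph of type $(g,n)$ is a finite connected graph (loops and multiple edges allowed), all vertices of degree $\ge3$, with a cyclic ordering of the half-edges at each vertex, whose thickening according to these cyclic orderings is an oriented surface of genus $g$ with $n$ boundary components (faces); it is trivalent if all vertices have degree $3$, in which case it has $6g-6+3n$ edges. Let $H$ be the set of half-edges, $s_0:H\to H$ the permutation sending a half-edge to the next half-edge at the same vertex in the (anticlockwise) cyclic order, and $e(h)$ the edge containing $h$. The oriented adjacency matrix is defined by \[B_{ij}=\sum_{h\in H,\ e(h)=i}\Big([e(s_0h)=j]-[e(s_0^{-1}h)=j]\Big),\] where $[\cdot]$ is $1$ if the condition holds and $0$ otherwise; thus $B_{ij}=0$ if edges $i,j$ are not adjacent or $i=j$, and otherwise $B_{ij}$ counts, with signs $\pm1$ determined by the cyclic order, the vertices at which edge $j$ follows or precedes edge $i$ (the paper fixes this sign convention by a diagram; the opposite overall sign gives the same rank). *)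

(* Defs.v *)
From mathcomp Require Import all_boot all_order all_algebra all_fingroup.
Set Implicit Arguments. Unset Strict Implicit. Unset Printing Implicit Defensive.
Import GRing.Theory Num.Theory.

(* A trivalent ribbon graph given combinatorially:
   - H : finite set of half-edges,
   - s0 : rotation of half-edges around vertices (vertices = cycles of s0),
   - s1 : the fixed-point-free involution pairing the two half-edges of an edge,
   - e  : the edge labelling, H -> 'I_N, whose fibres are exactly the
          s1-orbits (so edges are labelled bijectively by 0..N-1).
   Convention for permutations in mathcomp: (s * t) x = t (s x). *)

Definition is_ribbon_edge_labelling (H : finType) (s1 : {perm H}) (N : nat)
    (e : H -> 'I_N) : Prop :=
  [/\ forall h, s1 h != h,
      forall h, s1 (s1 h) = h,
      forall h h', e h = e h' <-> (h' = h \/ h' = s1 h)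
    & forall i : 'I_N, exists h, e h = i].

Definition trivalent (H : finType) (s0 : {perm H}) : Prop :=
  forall h, #|porbit s0 h| = 3.

Definition ribbon_connected (H : finType) (s0 s1 : {perm H}) : Prop :=
  forall h h', connect (fun x y => (y == s0 x) || (y == s1 x)) h h'.

(* boundary components (faces) of the thickening: cycles of h |-> s0 (s1 h) *)
Definition ribbon_faces (H : finType) (s0 s1 : {perm H}) : nat :=
  #|porbits (s1 * s0)%g|.

Definition ribbon_vertices (H : finType) (s0 : {perm H}) : nat :=
  #|porbits s0|.

(* thickening is a genus g surface with n boundary components:
   n faces, and Euler characteristic V - E + F = 2 - 2g *)
Definition ribbon_type (H : finType) (s0 s1 : {perm H}) (N g n : nat) : Prop :=
  ribbon_faces s0 s1 = n /\
  ((ribbon_vertices s0)%:Z - N%:Z + n%:Z = 2 - 2 * g%:Z)%R.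

Definition trivalent_ribbon_graph (H : finType) (s0 s1 : {perm H}) (N : nat)
    (e : H -> 'I_N) (g n : nat) : Prop :=
  [/\ is_ribbon_edge_labelling s1 e, trivalent s0,
      ribbon_connected s0 s1 & ribbon_type s0 s1 N g n].

Definition oriented_adjacency (H : finType) (s0 : {perm H}) (N : nat)
    (e : H -> 'I_N) : 'M[int]_N :=
  \matrix_(i < N, j < N)
    (\sum_(h : H | e h == i)
       (((e (s0 h) == j)%:R : int) - ((e ((s0^-1)%g h) == j)%:R : int)))%R.

Definition int_rank (m n : nat) (M : 'M[int]_(m, n)) : nat :=
  \rank (map_mx (intr : int -> rat) M).

(* Main.v *)
Require Import Defs.
From mathcomp Require Import all_boot all_order all_algebra all_fingroup.
From mathcomp Require Import lra zify.
Set Implicit Arguments. Unset Strict Implicit. Unset Printing Implicit Defensive.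
Import GRing.Theory Num.Theory.
Local Open Scope ring_scope.

Lemma fib_sum (H : finType) (s1 : {perm H}) (N : nat) (e : H -> 'I_N)
  (f : H -> rat) h :
  is_ribbon_edge_labelling s1 e ->
  \sum_(h' | e h' == e h) f h' = f h + f (s1 h).
Proof.
case=> Hne Hinv Hfib _.
rewrite (bigD1 h) ?eqxx //= (bigD1 (s1 h)) /=; last first.
  by rewrite eq_sym Hne andbT; apply/eqP/Hfib; right.
rewrite big1 ?addr0 // => h' /andP [/andP [/eqP Eh Nh] Ns].
by move: Nh Ns; have [->|->] := proj1 (Hfib h h') (esym Eh); rewrite eqxx.
Qed.

Lemma AT_entry (H : finType) (s0 : {perm H}) (N : nat) (e : H -> 'I_N)
  (x : 'rV[rat]_N) i :
  (x *m (map_mx intr (oriented_adjacency s0 e))^T) 0 i =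
  \sum_(h | e h == i) (x 0 (e (s0 h)) - x 0 (e ((s0^-1)%g h))).
Proof.
rewrite !mxE.
under eq_bigr => j _ do rewrite !mxE rmorph_sum mulr_sumr.
rewrite exchange_big /=; apply: eq_bigr => h _.
have pick1 a : \sum_(j < N) x 0 j * ((e a == j)%:R : rat) = x 0 (e a).
  rewrite (bigD1 (e a)) //= eqxx mulr1 big1 ?addr0 // => j Hj.
  by rewrite eq_sym (negPf Hj) mulr0.
rewrite -pick1 -pick1 -sumrB; apply: eq_bigr => j _.
by rewrite rmorphB /= !rmorph_nat mulrBr.
Qed.

Lemma main_rank (H : finType) (s0 s1 : {perm H}) (N : nat) (e : H -> 'I_N) :
  is_ribbon_edge_labelling s1 e -> (forall h, s0 (s0 (s0 h)) = h) ->
  int_rank (oriented_adjacency s0 e) = (N - #|porbits (s1 * s0)%g|)%N.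
Proof.
move=> Hlab H3; have Hlab' := Hlab; case: Hlab' => Hne Hinv Hfib Hsurj.
pose phi := (s1 * s0)%g.
have phiE a : phi a = s0 (s1 a) by rewrite permM.
have s0V a : (s0^-1)%g a = s0 (s0 a).
  by rewrite -{1}(H3 a) permK.
have es1 h : e (s1 h) = e h by apply/esym/Hfib; right.
pose A : 'M[rat]_N := map_mx intr (oriented_adjacency s0 e).
pose nF := #|porbits phi|.
pose K : 'M[rat]_(nF, N) := \matrix_(k < nF, i < N)
   \sum_(h | e h == i) ((porbit phi h == enum_val k)%:R : rat).
have KE (c : 'rV[rat]_nF) i : (c *m K) 0 i =
    \sum_(h | e h == i) \sum_(k < nF) c 0 k * ((porbit phi h == enum_val k)%:R).
  rewrite !mxE; under eq_bigr => k _ do rewrite !mxE mulr_sumr.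
  by rewrite exchange_big.
have porbit_phi h : porbit phi (phi h) = porbit phi h.
  by rewrite -[in RHS](porbit_perm phi 1 h) expg1.
pose z (x : 'rV[rat]_N) h := x 0 (e (s0 h)) - x 0 (e ((s0^-1)%g h)).
have kerE (x : 'rV[rat]_N) : x *m A^T = 0 <-> (forall h, z x h + z x (s1 h) = 0).
  split=> [Hx h | Hz].
    have := congr1 (fun M : 'rV_N => M 0 (e h)) Hx.
    by rewrite /= AT_entry mxE (fib_sum _ _ Hlab).
  apply/matrixP => r i; rewrite [r]ord1; have [h <-] := Hsurj i.
  by rewrite AT_entry mxE (fib_sum _ _ Hlab) Hz.
have gen (x : 'rV[rat]_N) (w : H -> rat) : (forall a, w (s0 (s1 a)) = w a) ->
    (forall h, x 0 (e h) = w h + w (s1 h)) -> forall h, z x h + z x (s1 h) = 0.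
  move=> Hw Hx h; rewrite /z !Hx !s0V.
  have ws a : w (s0 a) = w (s1 a) by rewrite -[in RHS](Hw (s1 a)) Hinv.
  have e1 := ws (s0 h); have e2 := ws (s0 (s0 h)); rewrite H3 in e2.
  have e3 := ws h; have e4 := ws (s0 (s1 h)); have e5 := ws (s0 (s0 (s1 h))).
  rewrite H3 in e5; have e6 := ws (s1 h); rewrite Hinv in e6.
  rewrite ?Hinv; lra.
have sKA : (K <= kermx A^T)%MS.
  rewrite sub_kermx; apply/eqP/row_matrixP => k; rewrite row_mul row0; apply/kerE.
  apply: (gen _ (fun a => ((porbit phi a == enum_val k)%:R : rat))).
    by move=> a /=; rewrite -phiE porbit_phi.
  by move=> h; rewrite !mxE (fib_sum _ _ Hlab).
have sAK : (kermx A^T <= K)%MS.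
  apply/row_subP => r; set x := row r (kermx A^T).
  have Hx : x *m A^T = 0 by rewrite -row_mul mulmx_ker row0.
  have Hz := proj1 (kerE x) Hx.
  pose u h := (x 0 (e h) - z x h) / 2.
  have Hu h : u (s0 (s1 h)) = u h.
    rewrite /u /z permK; have := Hz h; rewrite /z s0V -(es1 h) => E.
    rewrite s0V in E; lra.
  have Hui i a : u ((phi ^+ i)%g a) = u a.
    elim: i => [|i IH]; first by rewrite expg0 perm1.
    by rewrite expgSr permM phiE Hu IH.
  pose cf (S : {set H}) := if [pick h | porbit phi h == S] is Some h then u h else 0.
  have Hsum h : \sum_(k < nF) (\row_k cf (enum_val k)) 0 k *
                  ((porbit phi h == enum_val k)%:R) = u h.
    rewrite (eq_bigr (fun k => cf (enum_val k) * (porbit phi h == enum_val k)%:R));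
      last by move=> k _; rewrite mxE.
    rewrite -(big_enum_val (fun S => cf S * (porbit phi h == S)%:R)) /=.
    rewrite (bigD1 (porbit phi h)) /=; last by apply/imsetP; exists h.
    rewrite eqxx mulr1 big1 ?addr0; last first.
      by move=> S /andP [_ HS]; rewrite eq_sym (negPf HS) mulr0.
    rewrite /cf; case: pickP => [h' /eqP Eh' | Hn]; last by move: (Hn h); rewrite eqxx.
    have : h' \in porbit phi h by rewrite -Eh' porbit_id.
    by case/porbitP => i ->; rewrite Hui.
  apply/submxP; exists (\row_k cf (enum_val k)); apply/matrixP => r' i.
  rewrite [r']ord1 KE; under eq_bigr => h _ do rewrite Hsum.
  have [h0 <-] := Hsurj i; rewrite (fib_sum _ _ Hlab) /u.
  have := Hz h0; rewrite es1; lra.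
have free : row_free K.
  rewrite -kermx_eq0; apply/eqP/row_matrixP => r; rewrite row0.
  set c := row r (kermx K).
  have Hc : c *m K = 0 by rewrite -row_mul mulmx_ker row0.
  pose w h := \sum_(k < nF) c 0 k * ((porbit phi h == enum_val k)%:R).
  have Hw0 h : w h + w (s1 h) = 0.
    by have := congr1 (fun M : 'rV_N => M 0 (e h)) Hc; rewrite /= KE mxE (fib_sum _ _ Hlab).
  have Hwinv a : w (s0 (s1 a)) = w a by rewrite /w -phiE porbit_phi.
  have ws a : w (s0 a) = w (s1 a) by rewrite -[in RHS](Hwinv (s1 a)) Hinv.
  have Hwz a : w a = 0.
    have e1 := Hw0 a; have e2 := ws a; have e3 := Hw0 (s0 a); have e4 := ws (s0 a).
    have e5 := Hw0 (s0 (s0 a)); have e6 := ws (s0 (s0 a)); rewrite H3 in e6; lra.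
  apply/matrixP => r' k; rewrite [r']ord1 [RHS]mxE.
  suff : c 0 k = 0 by [].
  have /imsetP [h _ Eh] := enum_valP k.
  have := Hwz h; rewrite /w (bigD1 k) //= -Eh eqxx mulr1 big1 ?addr0 //.
  move=> k' Hk'; by rewrite (inj_eq enum_val_inj) eq_sym (negPf Hk') mulr0.
have rK : \rank K = nF by apply/eqP.
have rk : \rank (kermx A^T) = (N - \rank A)%N by rewrite mxrank_ker mxrank_tr.
change (\rank A = (N - nF)%N).
have := mxrankS sKA; have := mxrankS sAK; have := rank_leq_row A.
lia.
Qed.

Local Close Scope ring_scope.

Theorem lemma4p3 (g n : nat) (H : finType) (s0 s1 : {perm H})
    (e : H -> 'I_(6 * g + 3 * n - 6)) :
  1 <= n -> 2 < 2 * g + n ->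
  trivalent_ribbon_graph s0 s1 e g n ->
  int_rank (oriented_adjacency s0 e) = 6 * g + 2 * n - 6.
Proof.
move=> Hn Hgn [Hlab Htri _ [Hf _]].
have H3 h : s0 (s0 (s0 h)) = h by have := iter_porbit s0 h; rewrite Htri.
rewrite (main_rank Hlab H3); move: Hf; rewrite /ribbon_faces => ->; lia.
Qed.
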